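(* Let $f\subseteq\mathcal{X}\times\mathcal{Y}\times\mathcal{Z}$ be a relation (finite sets), $X'Y'$ a distribution on $\mathcal{X}\times\mathcal{Y}$, $z\in\mathcal{Z}$, $\beta:=\Pr_{(x,y)\leftarrow X'Y'}[f(x,y)=\{z\}]$, and $c\ge1$. Let $\varepsilon,\varepsilon',\delta>0$ satisfy $(\delta+2\varepsilon)/(\beta-3\varepsilon)<(1+\varepsilon')\delta/\beta$. Let $\Pi$ be a zero-communication public-coin protocol run on input $(x,y)\leftarrow X'Y'$, with public coin $R$ (independent of the input), Alice's output $A=a(x,R)\in\mathcal{Z}\cup\{\bot\}$ and Bob's output $B=b(y,R)\in\mathcal{Z}\cup\{\bot\}$. Let $X^1Y^1A^1B^1R^1$ denote the distribution of $X'Y'ABR$ conditioned on the event $A=B\neq\bot$. Suppose 1. $\Pr[A=B\neq\bot]\ge2^{-c}$; 2. $\|X^1Y^1-X'Y'\|_1\le\varepsilon$; 3. $\Pr[(X^1,Y^1,A^1)\in f]\ge1-\varepsilon$. Then $\widetilde{\mathrm{srec}}^{z,X'Y'}_{(1+\varepsilon')\delta/\beta,\;\delta}(f)<c/\varepsilon$.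
   Context: $\|\cdot\|_1$ denotes half the $\ell_1$ norm (total variation distance). $f(x,y):=\{z:(x,y,z)\in f\}$, $g^{-1}(z):=\{(x,y):(x,y,z)\in g\}$. Smooth rectangle bound: $\widetilde{\mathrm{rec}}^{z,\lambda}_{\varepsilon}(g):=\min\{\log_2(1/\lambda(R)) : R\text{ a rectangle with }\lambda(R)>0,\ \lambda(g^{-1}(z)\cap R)\ge(1-\varepsilon)\lambda(R)\}$ and $\widetilde{\mathrm{srec}}^{z,\lambda}_{\varepsilon,\delta}(f):=\max\{\widetilde{\mathrm{rec}}^{z,\lambda}_{\varepsilon}(g): g\subseteq\mathcal{X}\times\mathcal{Y}\times\mathcal{Z},\ \Pr_{(x,y)\leftarrow\lambda}[f(x,y)\neq g(x,y)]\le\delta\}$. *)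

(* Defs.v *)
From mathcomp Require Import all_boot.
From Stdlib Require Import Reals.
Set Implicit Arguments. Unset Strict Implicit. Unset Printing Implicit Defensive.

Local Open Scope R_scope.

Definition sumR {T : finType} (F : T -> R) : R := \big[Rplus/0%R]_(t : T) F t.

Definition ind (b : bool) : R := if b then 1 else 0.

Definition is_distr {T : finType} (p : T -> R) : Prop :=
  (forall t, 0 <= p t) /\ sumR p = 1.

Definition log2 (x : R) : R := ln x / ln 2.

Definition tvdist {T : finType} (p q : T -> R) : R :=
  / 2 * sumR (fun t => Rabs (p t - q t)).

(* relations f ⊆ X×Y×Z are boolean predicates f x y z *)
Definition same_image {X Y Z : finType} (f g : X -> Y -> Z -> bool) (x : X) (y : Y)
  : bool := [forall u : Z, f x y u == g x y u].

Definition is_singleton_at {X Y Z : finType} (f : X -> Y -> Z -> bool) (z : Z)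
  (x : X) (y : Y) : bool := [forall u : Z, f x y u == (u == z)].

Definition beta {X Y Z : finType} (f : X -> Y -> Z -> bool) (lam : X * Y -> R) (z : Z)
  : R := sumR (fun xy : X * Y => lam xy * ind (is_singleton_at f z xy.1 xy.2)).

Definition rect_mass {X Y : finType} (lam : X * Y -> R) (S : {set X}) (T : {set Y})
  : R := sumR (fun xy : X * Y => lam xy * ind ((xy.1 \in S) && (xy.2 \in T))).

Definition rect_mass_z {X Y Z : finType} (lam : X * Y -> R) (g : X -> Y -> Z -> bool)
  (z : Z) (S : {set X}) (T : {set Y}) : R :=
  sumR (fun xy : X * Y => lam xy * ind [&& xy.1 \in S, xy.2 \in T & g xy.1 xy.2 z]).

(* rec^{z,lam}_eps(g) < t, where rec is the minimum over admissible rectangles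
   of log2(1/lam(R)) (minimum of the empty set = +infinity). Since there are
   finitely many rectangles, "min < t" is exactly "some admissible rectangle
   has value < t". *)
Definition rec_lt {X Y Z : finType} (g : X -> Y -> Z -> bool) (z : Z)
  (lam : X * Y -> R) (eps t : R) : Prop :=
  exists (S : {set X}) (T : {set Y}),
    0 < rect_mass lam S T /\
    (1 - eps) * rect_mass lam S T <= rect_mass_z lam g z S T /\
    log2 (1 / rect_mass lam S T) < t.

Definition prob_differ {X Y Z : finType} (f g : X -> Y -> Z -> bool) (lam : X * Y -> R)
  : R := sumR (fun xy : X * Y => lam xy * ind (~~ same_image f g xy.1 xy.2)).

(* srec^{z,lam}_{eps,delta}(f) < t : srec is the maximum of rec over the
   (finitely many) relations g with Pr[f <> g] <= delta; max < t iff every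
   such g has rec < t. *)
Definition srec_lt {X Y Z : finType} (f : X -> Y -> Z -> bool) (z : Z)
  (lam : X * Y -> R) (eps delta t : R) : Prop :=
  forall g : X -> Y -> Z -> bool, prob_differ f g lam <= delta -> rec_lt g z lam eps t.

(* ---- zero-communication public-coin protocol ----
   Coin space W (finite) with distribution mu, independent of the input;
   Alice outputs a x w, Bob outputs b y w, None standing for ⊥. *)

Definition agree {X Y Z W : finType} (a : X -> W -> option Z) (b : Y -> W -> option Z)
  (x : X) (y : Y) (w : W) : bool := (a x w == b y w) && (a x w != None).

Definition prob_agree {X Y Z W : finType} (lam : X * Y -> R) (mu : W -> R)
  (a : X -> W -> option Z) (b : Y -> W -> option Z) : R :=
  sumR (fun p : (X * Y) * W => lam p.1 * mu p.2 * ind (agree a b p.1.1 p.1.2 p.2)).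

Definition cond_XY {X Y Z W : finType} (lam : X * Y -> R) (mu : W -> R)
  (a : X -> W -> option Z) (b : Y -> W -> option Z) (xy : X * Y) : R :=
  sumR (fun w : W => lam xy * mu w * ind (agree a b xy.1 xy.2 w))
  / prob_agree lam mu a b.

Definition prob_cond_in_f {X Y Z W : finType} (f : X -> Y -> Z -> bool)
  (lam : X * Y -> R) (mu : W -> R)
  (a : X -> W -> option Z) (b : Y -> W -> option Z) : R :=
  sumR (fun p : (X * Y) * W =>
          lam p.1 * mu p.2 *
          ind (agree a b p.1.1 p.1.2 p.2 &&
               match a p.1.1 p.2 with Some u => f p.1.1 p.1.2 u | None => false end))
  / prob_agree lam mu a b.

(* Main.v *)
Require Import Defs.
From HB Require Import structures.
From mathcomp Require Import all_boot.
From Stdlib Require Import Reals Lra Classical.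
Set Implicit Arguments. Unset Strict Implicit. Unset Printing Implicit Defensive.
Local Open Scope R_scope.
Local Notation ind := Defs.ind.

HB.instance Definition _ := Monoid.isComLaw.Build R 0 Rplus (fun a b c => esym (Rplus_assoc a b c)) Rplus_comm Rplus_0_l.

Lemma sumR_ext (T : finType) (F G : T -> R) : (forall t, F t = G t) -> sumR F = sumR G.
Proof. move=> H; apply: eq_bigr => t _; exact: H. Qed.

Lemma sumR_plus (T : finType) (F G : T -> R) :
  sumR (fun t => F t + G t) = sumR F + sumR G.
Proof. exact: big_split. Qed.

Lemma sumR_scal (T : finType) (k : R) (F : T -> R) :
  sumR (fun t => k * F t) = k * sumR F.
Proof.
rewrite /sumR; apply: (big_rec2 (fun a b => a = k * b)); first by rewrite Rmult_0_r.
by move=> i a b _ ->; rewrite Rmult_plus_distr_l.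
Qed.

Lemma sumR_minus (T : finType) (F G : T -> R) :
  sumR (fun t => F t - G t) = sumR F - sumR G.
Proof.
rewrite (sumR_ext (G := fun t => F t + (-1) * G t)); last by move=> t; ring.
by rewrite sumR_plus sumR_scal; ring.
Qed.

Lemma sumR_le (T : finType) (F G : T -> R) :
  (forall t, F t <= G t) -> sumR F <= sumR G.
Proof.
move=> H; rewrite /sumR; apply: (big_ind2 (fun a b => a <= b)) => //.
- exact: Rle_refl.
- by move=> *; apply: Rplus_le_compat.
Qed.

Lemma sumR_0 (T : finType) : sumR (fun _ : T => 0) = 0.
Proof. by rewrite /sumR big1. Qed.

Lemma sumR_ge0 (T : finType) (F : T -> R) : (forall t, 0 <= F t) -> 0 <= sumR F.
Proof. move=> H; rewrite -(sumR_0 T); exact: sumR_le. Qed.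

Lemma sumR_pair (A B : finType) (F : A * B -> R) :
  sumR F = sumR (fun a => sumR (fun b => F (a, b))).
Proof. by rewrite /sumR pair_big; apply: eq_bigr => -[]. Qed.

Lemma sumR_swap (A B : finType) (F : A -> B -> R) :
  sumR (fun a => sumR (fun b => F a b)) = sumR (fun b => sumR (fun a => F a b)).
Proof. exact: exchange_big. Qed.

Lemma sumR_exists (T : finType) (F G : T -> R) :
  sumR F < sumR G -> exists t, F t < G t.
Proof.
move=> H; apply: NNPP => Hn; have: sumR G <= sumR F.
  apply: sumR_le => t; apply: Rnot_lt_le => Ht; apply: Hn; by exists t.
lra.
Qed.

Lemma tv_event (T : finType) (q l : T -> R) (h : T -> bool) :
  sumR q = sumR l ->
  sumR (fun t => l t * ind (h t)) - sumR (fun t => q t * ind (h t)) <= tvdist q l /\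
  sumR (fun t => q t * ind (h t)) - sumR (fun t => l t * ind (h t)) <= tvdist q l.
Proof.
move=> Hs.
have key : forall s : R, (s = 1 \/ s = -1) ->
   sumR (fun t => (l t - q t) * (s * (2 * ind (h t) - 1))) <= 2 * tvdist q l.
  move=> s Hsv; rewrite /tvdist -Rmult_assoc Rinv_r; last lra.
  rewrite Rmult_1_l; apply: sumR_le => t.
  have Hb : Rabs (s * (2 * ind (h t) - 1)) = 1.
    rewrite /Defs.ind; case: (h t); case: Hsv => ->.
    - rewrite Rabs_right; lra.
    - rewrite Rabs_left; lra.
    - rewrite Rabs_left; lra.
    - rewrite Rabs_right; lra.
  rewrite -Rabs_Ropp Ropp_minus_distr.
  apply: Rle_trans (Rle_abs _) _; rewrite Rabs_mult Hb Rmult_1_r; exact: Rle_refl.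
have E : forall s, sumR (fun t => (l t - q t) * (s * (2 * ind (h t) - 1))) =
  s * (2 * (sumR (fun t => l t * ind (h t)) - sumR (fun t => q t * ind (h t))) - (sumR l - sumR q)).
  move=> s; rewrite -sumR_minus -sumR_minus -sumR_scal -sumR_minus -sumR_scal.
  by apply: sumR_ext => t; ring.
have := key 1 (or_introl erefl); have := key (-1) (or_intror erefl).
rewrite !E Hs; lra.
Qed.

Lemma ln2_half : 1 <= 2 * ln 2.
Proof.
have h := @ln_pow 2 ltac:(lra) 2.
have -> : 2 * ln 2 = INR 2 * ln 2 by simpl; ring.
rewrite -h -[X in X <= _]ln_exp; left; apply: ln_increasing; first exact: exp_pos.
have := exp_le_3; simpl; lra.
Qed.

Lemma ln2_pos : 0 < ln 2.
Proof. have := ln2_half; lra. Qed.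

Lemma rpow_bound (c e : R) : 1 <= c -> 0 < e -> e <= /2 ->
  Rpower 2 (- (c / e)) <= e * Rpower 2 (- c).
Proof.
move=> Hc He He2.
have Hsplit : - (c / e) = - c + - (c / e - c) by ring.
rewrite Hsplit Rpower_plus Rmult_comm.

apply: Rmult_le_compat_r; first by rewrite /Rpower; left; apply: exp_pos.
have H1 : 1 / e - 1 <= c / e - c.
  have -> : c / e - c = c * (1 / e - 1) by field; lra.
  have : 1 <= 1 / e by apply: (Rmult_le_reg_r e) => //; field_simplify; lra.
  move=> h; nra.
have H2 : / e <= Rpower 2 (1 / e - 1).
  have -> : 1 / e - 1 = 1 + (1 / e - 2) by ring.
  rewrite Rpower_plus Rpower_1; last lra.
  have Hu : 0 <= 1 / e - 2.
    have : 2 <= 1 / e by apply: (Rmult_le_reg_r e) => //; field_simplify; lra.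
    lra.
  have Hx : 1 + (1 / e - 2) * ln 2 <= Rpower 2 (1 / e - 2).
    rewrite /Rpower; exact: exp_ineq1_le.
  have := ln2_half; rewrite /Rdiv Rmult_1_l in Hu Hx |- *; nra.
have H3 : Rpower 2 (1 / e - 1) <= Rpower 2 (c / e - c).
  apply: Rle_Rpower => //; lra.
have Hp : 0 < Rpower 2 (c / e - c) by rewrite /Rpower; apply: exp_pos.
rewrite Rpower_Ropp.
have h4 : / Rpower 2 (c / e - c) <= / / e.
  apply: Rinv_le_contravar; first by apply: Rinv_0_lt_compat.
  lra.
by rewrite Rinv_inv in h4.
Qed.

Lemma log2_bound (k r : R) : Rpower 2 (- k) < r -> log2 (1 / r) < k.
Proof.
move=> H.
have Hp : 0 < Rpower 2 (- k) by rewrite /Rpower; apply: exp_pos.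
have Hr : 0 < r by lra.
rewrite /log2 /Rdiv Rmult_1_l ln_Rinv //.
have : ln (Rpower 2 (- k)) < ln r by apply: ln_increasing.
rewrite /Rpower ln_exp => h.
have l2 := ln2_pos.
apply: (Rmult_lt_reg_r (ln 2)) => //.
rewrite Rmult_assoc Rinv_l; last lra.
nra.
Qed.

Section Main.
Variables (X Y Z W : finType) (f g : X -> Y -> Z -> bool) (lam : X * Y -> R) (z : Z)
  (mu : W -> R) (a : X -> W -> option Z) (b : Y -> W -> option Z).

Definition Zev (p : (X * Y) * W) : bool := (a p.1.1 p.2 == Some z) && (b p.1.2 p.2 == Some z).
Definition Agev (p : (X * Y) * W) : bool := agree a b p.1.1 p.1.2 p.2.
Definition Finev (p : (X * Y) * W) : bool :=
  agree a b p.1.1 p.1.2 p.2 &&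
  match a p.1.1 p.2 with Some u => f p.1.1 p.1.2 u | None => false end.
Definition mm (p : (X * Y) * W) : R := lam p.1 * mu p.2.

Ltac solve_ind := rewrite /ind /=; repeat (case: ifP => _); lra.

Lemma pw_Z p : ind (Agev p) * ind (is_singleton_at f z p.1.1 p.1.2) - ind (Agev p)
   + ind (Finev p) <= ind (Zev p).
Proof.
case: p => [[x y] w]; rewrite /Agev /Finev /Zev /agree /=.
case Ha: (a x w) => [u|]; case Hb: (b y w) => [v|] /=; try solve_ind.
case: (boolP (Some u == Some v)) => /= Huv; last solve_ind.
case: (boolP (is_singleton_at f z x y)) => HS; last solve_ind.
case: (boolP (f x y u)) => Hf; last solve_ind.
move/forallP: HS => /(_ u); rewrite Hf => Huz.
have Huz2 : u = z by move/eqP: Huz => /esym /eqP.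
move/eqP: Huv => [<-]; subst u; rewrite eqxx /=; solve_ind.
Qed.

Lemma pw_bad p : ind (Zev p && ~~ g p.1.1 p.1.2 z) <=
  (ind (Agev p) - ind (Finev p)) + ind (Agev p) * ind (~~ same_image f g p.1.1 p.1.2).
Proof.
case: p => [[x y] w]; rewrite /Agev /Finev /Zev /agree /=.
case: (boolP ((a x w == Some z) && (b y w == Some z))) => HZ /=; last first.
  case: (a x w == b y w); case: (a x w != None); case: (match a x w with Some u => f x y u | None => false end); case: (same_image f g x y); solve_ind.
case/andP: HZ => /eqP -> /eqP ->; rewrite eqxx /=.
case: (boolP (g x y z)) => Hg /=; first by solve_ind.
case: (boolP (f x y z)) => Hf; last by solve_ind.
have -> : same_image f g x y = false.
  apply/negbTE/negP => /forallP /(_ z); by rewrite Hf (negbTE Hg).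
solve_ind.
Qed.

Lemma pw_split p : ind (Zev p) = ind (Zev p && g p.1.1 p.1.2 z) + ind (Zev p && ~~ g p.1.1 p.1.2 z).
Proof. rewrite /ind; case: (Zev p); case: (g _ _ _) => /=; lra. Qed.

Lemma cond_sum (h : X * Y -> R) :
  sumR (fun xy => cond_XY lam mu a b xy * h xy) =
  / prob_agree lam mu a b * sumR (fun p => mm p * ind (Agev p) * h p.1).
Proof.
rewrite (sumR_pair (fun p : (X * Y) * W => mm p * ind (Agev p) * h p.1)) -sumR_scal; apply: sumR_ext => xy /=.
rewrite /cond_XY /Rdiv /mm /Agev /=.
have -> : sumR (fun w => lam xy * mu w * ind (agree a b xy.1 xy.2 w) * h xy) =
   h xy * sumR (fun w => lam xy * mu w * ind (agree a b xy.1 xy.2 w)).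
  by rewrite -sumR_scal; apply: sumR_ext => w; ring.
ring.
Qed.

Definition Sw (w : W) : {set X} := [set x | a x w == Some z].
Definition Tw (w : W) : {set Y} := [set y | b y w == Some z].

Lemma decomp_Z : sumR (fun p => mm p * ind (Zev p)) =
  sumR (fun w => mu w * rect_mass lam (Sw w) (Tw w)).
Proof.
rewrite sumR_pair sumR_swap; apply: sumR_ext => w; rewrite /rect_mass -sumR_scal.
apply: sumR_ext => xy; rewrite /mm /Zev /Sw /Tw !inE /=; ring.
Qed.

Lemma decomp_Zg : sumR (fun p => mm p * ind (Zev p && g p.1.1 p.1.2 z)) =
  sumR (fun w => mu w * rect_mass_z lam g z (Sw w) (Tw w)).
Proof.
rewrite sumR_pair sumR_swap; apply: sumR_ext => w; rewrite /rect_mass_z -sumR_scal.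
apply: sumR_ext => xy; rewrite /mm /Zev /Sw /Tw !inE /= andbA; ring.
Qed.

Lemma rz_le_r w : rect_mass_z lam g z (Sw w) (Tw w) <= rect_mass lam (Sw w) (Tw w)
  \/ ~ (forall t, 0 <= lam t).
Proof.
case: (classic (forall t, 0 <= lam t)) => H; last by right.
left; apply: sumR_le => xy; apply: Rmult_le_compat_l => //.
rewrite /ind; case: (xy.1 \in Sw w); case: (xy.2 \in Tw w); case: (g _ _ _) => /=; lra.
Qed.

Lemma pw_Z' (Hl0 : forall t, 0 <= lam t) (Hm0 : forall w, 0 <= mu w) p :
  mm p * ind (Agev p) * ind (is_singleton_at f z p.1.1 p.1.2)
  - mm p * ind (Agev p) + mm p * ind (Finev p) <= mm p * ind (Zev p).
Proof.
have h1 : 0 <= mm p by apply: Rmult_le_pos.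
have h2 := pw_Z p.
have := Rmult_le_compat_l _ _ _ h1 h2; lra.
Qed.

Lemma pw_bad' (Hl0 : forall t, 0 <= lam t) (Hm0 : forall w, 0 <= mu w) p :
  mm p * ind (Zev p && ~~ g p.1.1 p.1.2 z) <=
  (mm p * ind (Agev p) - mm p * ind (Finev p))
             + mm p * ind (Agev p) * ind (~~ same_image f g p.1.1 p.1.2).
Proof.
have h1 : 0 <= mm p by apply: Rmult_le_pos.
have h2 := pw_bad p.
have := Rmult_le_compat_l _ _ _ h1 h2; lra.
Qed.

Lemma main_core (c eps eps' delta : R) :
  is_distr lam -> is_distr mu ->
  (1 <= c)%R ->
  (0 < eps)%R -> (0 < eps')%R -> (0 < delta)%R ->
  (0 < beta f lam z - 3 * eps)%R ->
  ((delta + 2 * eps) / (beta f lam z - 3 * eps)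
     < (1 + eps') * delta / beta f lam z)%R ->
  (Rpower 2 (- c) <= prob_agree lam mu a b)%R ->
  (tvdist (cond_XY lam mu a b) lam <= eps)%R ->
  (1 - eps <= prob_cond_in_f f lam mu a b)%R ->
  prob_differ f g lam <= delta ->
  rec_lt g z lam ((1 + eps') * delta / beta f lam z) (c / eps).
Proof.
move=> [Hl0 Hl1] [Hm0 Hm1] Hc He He' Hd Hb Hrat HP Htv Hf Hg.
have HP0 : 0 < prob_agree lam mu a b.
  apply: Rlt_le_trans HP; rewrite /Rpower; exact: exp_pos.
set P := prob_agree lam mu a b in HP HP0 Htv Hf *.
have HPdef : P = sumR (fun p => mm p * ind (Agev p)) by [].
have Hmm0 : forall p, 0 <= mm p by move=> p; apply: Rmult_le_pos.
have Hbt1 : beta f lam z <= 1.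
  rewrite -Hl1; apply: sumR_le => t; have := Hl0 t; rewrite /ind; case: ifP => _; lra.
set bt := beta f lam z in Hb Hrat Hbt1 *.
set e1 := (1 + eps') * delta / bt in Hrat *.
have Hrat' : delta + 2 * eps < e1 * (bt - 3 * eps).
  have := Rmult_lt_compat_r _ _ _ Hb Hrat.
  have -> : (delta + 2 * eps) / (bt - 3 * eps) * (bt - 3 * eps) = delta + 2 * eps.
    by field; lra.
  done.
have He1 : 0 <= e1 by nra.
have Hq1 : sumR (cond_XY lam mu a b) = sumR lam.
  have E := cond_sum (fun _ => 1); cbv beta in E; rewrite -/P in E.
  rewrite Hl1 (sumR_ext (G := fun xy => cond_XY lam mu a b xy * 1)); last by move=> ?; ring.
  rewrite E.
  have -> : sumR (fun p => mm p * ind (Agev p) * 1) = P by rewrite HPdef; apply: sumR_ext => ?; ring.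
  by field; lra.
set AS := sumR (fun p => mm p * ind (Agev p) * ind (is_singleton_at f z p.1.1 p.1.2)).
set AD := sumR (fun p => mm p * ind (Agev p) * ind (~~ same_image f g p.1.1 p.1.2)).
set AF := sumR (fun p => mm p * ind (Finev p)).
have HAS : P * (bt - eps) <= AS.
  have [H1 _] := tv_event (fun xy => is_singleton_at f z xy.1 xy.2) Hq1.
  have E := cond_sum (fun xy => ind (is_singleton_at f z xy.1 xy.2)); cbv beta in E; rewrite -/P in E.
  rewrite E -/AS in H1.
  have Hbd : bt = sumR (fun t => lam t * ind (is_singleton_at f z t.1 t.2)) by [].
  rewrite -Hbd in H1.
  have -> : AS = P * (/ P * AS) by field; lra.
  apply: Rmult_le_compat_l; lra.
have HAD : AD <= P * (delta + eps).
  have [_ H1] := tv_event (fun xy => ~~ same_image f g xy.1 xy.2) Hq1.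
  have E := cond_sum (fun xy => ind (~~ same_image f g xy.1 xy.2)); cbv beta in E; rewrite -/P in E.
  rewrite E -/AD in H1.
  have Hbd : prob_differ f g lam = sumR (fun t => lam t * ind (~~ same_image f g t.1 t.2)) by [].
  rewrite -Hbd in H1.
  have -> : AD = P * (/ P * AD) by field; lra.
  apply: Rmult_le_compat_l; lra.
have HAF : P * (1 - eps) <= AF.
  have Hfd : prob_cond_in_f f lam mu a b = AF / P by [].
  rewrite Hfd in Hf.
  have -> : AF = P * (AF / P) by field; lra.
  apply: Rmult_le_compat_l; lra.
set SZ := sumR (fun p => mm p * ind (Zev p)).
set SZg := sumR (fun p => mm p * ind (Zev p && g p.1.1 p.1.2 z)).
set SB := sumR (fun p => mm p * ind (Zev p && ~~ g p.1.1 p.1.2 z)).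
have HSZ : AS - P + AF <= SZ.
  have -> : AS - P + AF = sumR (fun p => mm p * ind (Agev p) * ind (is_singleton_at f z p.1.1 p.1.2)
             - mm p * ind (Agev p) + mm p * ind (Finev p)).
    by rewrite sumR_plus sumR_minus.
  apply: sumR_le => p; exact: (pw_Z' Hl0 Hm0 p).
have HSB : SB <= (P - AF) + AD.
  have -> : (P - AF) + AD = sumR (fun p => (mm p * ind (Agev p) - mm p * ind (Finev p))
             + mm p * ind (Agev p) * ind (~~ same_image f g p.1.1 p.1.2)).
    by rewrite sumR_plus sumR_minus.
  apply: sumR_le => p; exact: (pw_bad' Hl0 Hm0 p).
have HSsplit : SZ = SZg + SB.
  rewrite /SZ /SZg /SB -sumR_plus; apply: sumR_ext => p; cbv beta; rewrite (pw_split p); exact: Rmult_plus_distr_l.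
have HSZd := decomp_Z; have HSZgd := decomp_Zg.
rewrite -/SZ in HSZd; rewrite -/SZg in HSZgd.
set t := Rpower 2 (- (c / eps)).
have Ht : t <= eps * P.
  apply: Rle_trans (rpow_bound Hc He _) _; first lra.
  apply: Rmult_le_compat_l; lra.
have Ht0 : 0 < t by rewrite /t /Rpower; exact: exp_pos.
apply: NNPP => Hno.
have Hpw : forall w, e1 * (mu w * rect_mass lam (Sw w) (Tw w)) - e1 * t * mu w <=
   mu w * rect_mass lam (Sw w) (Tw w) - mu w * rect_mass_z lam g z (Sw w) (Tw w).
  move=> w.
  have Hrz : rect_mass_z lam g z (Sw w) (Tw w) <= rect_mass lam (Sw w) (Tw w).
    by case: (rz_le_r w) => // [] /(_ Hl0).
  have Hmw := Hm0 w.
  case: (Rle_lt_dec (rect_mass lam (Sw w) (Tw w)) t) => Hr.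
    have A : 0 <= mu w * (rect_mass lam (Sw w) (Tw w) - rect_mass_z lam g z (Sw w) (Tw w)).
      apply: Rmult_le_pos; lra.
    have B : 0 <= e1 * (mu w * (t - rect_mass lam (Sw w) (Tw w))).
      apply: Rmult_le_pos => //; apply: Rmult_le_pos; lra.
    lra.
  have Hlt : rect_mass_z lam g z (Sw w) (Tw w) < (1 - e1) * rect_mass lam (Sw w) (Tw w).
    apply: Rnot_le_lt => Hle; apply: Hno; exists (Sw w), (Tw w); split; first lra.
    split => //; exact: log2_bound.
  have A : 0 <= mu w * (rect_mass lam (Sw w) (Tw w) - rect_mass_z lam g z (Sw w) (Tw w)
                  - e1 * rect_mass lam (Sw w) (Tw w)).
    apply: Rmult_le_pos; lra.
  have B : 0 <= e1 * t * mu w.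
    apply: Rmult_le_pos => //; apply: Rmult_le_pos; lra.
  lra.
have Hsum := sumR_le Hpw.
rewrite !sumR_minus !sumR_scal Hm1 -HSZd -HSZgd in Hsum.
have HSB' : SB = SZ - SZg by lra.
have Hfin : e1 * SZ - e1 * t <= P * (delta + 2 * eps) by lra.
have H2 : e1 * (P * (bt - 3 * eps)) <= e1 * SZ - e1 * t.
  have : P * (bt - 3 * eps) <= SZ - t by lra.
  move=> h; nra.
have H3 : P * (delta + 2 * eps) < P * (e1 * (bt - 3 * eps)) by apply: Rmult_lt_compat_l.
lra.
Qed.

End Main.


Theorem mainTheorem4 (X Y Z W : finType) (f : X -> Y -> Z -> bool)
  (lam : X * Y -> R) (z : Z) (c eps eps' delta : R)
  (mu : W -> R) (a : X -> W -> option Z) (b : Y -> W -> option Z) :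
  is_distr lam -> is_distr mu ->
  (1 <= c)%R ->
  (0 < eps)%R -> (0 < eps')%R -> (0 < delta)%R ->
  (0 < beta f lam z - 3 * eps)%R ->
  ((delta + 2 * eps) / (beta f lam z - 3 * eps)
     < (1 + eps') * delta / beta f lam z)%R ->
  (Rpower 2 (- c) <= prob_agree lam mu a b)%R ->
  (tvdist (cond_XY lam mu a b) lam <= eps)%R ->
  (1 - eps <= prob_cond_in_f f lam mu a b)%R ->
  srec_lt f z lam ((1 + eps') * delta / beta f lam z) delta (c / eps).
Proof.
move=> H1 H2 H3 H4 H5 H6 H7 H8 H9 H10 H11 g Hg.
exact: (main_core H1 H2 H3 H4 H5 H6 H7 H8 H9 H10 H11 Hg).
Qed.
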